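(* Let $V\subset\mathbb{R}^{n_s}$ be an oriented open set, $\mathcal{G}$ a Riemannian metric on $V$, $\mathcal{J}$ a taming map on $V$, and $\mathcal{N}=\mu(\mathcal{J})$. Then $$\{(f,\mathfrak{A})\in\mathrm{Iso}(V,\mathcal{G})\times\mathrm{Sp}(2n_v,\mathbb{R}):\mathfrak{A}\cdot\mathcal{N}=\mathcal{N}\circ f\}=\{(f,\mathfrak{A})\in\mathrm{Iso}(V,\mathcal{G})\times\mathrm{Sp}(2n_v,\mathbb{R}):\mathfrak{A}\mathcal{J}\mathfrak{A}^{-1}=\mathcal{J}\circ f\},$$ so that the identity map gives a canonical isomorphism of groups $\mathrm{U}(\mathcal{G},\mathcal{N})\cong\mathrm{U}(\mathcal{G},\mathcal{J})$ between these two sets (with componentwise composition).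
   Context: $\mathrm{Iso}(V,\mathcal{G})$ is the isometry group of $(V,\mathcal{G})$. The standard symplectic form $\omega$ on $\mathbb{R}^{2n_v}$ has matrix $\begin{pmatrix}0&-\mathrm{Id}\\ \mathrm{Id}&0\end{pmatrix}$ in the canonical basis; $\mathrm{Sp}(2n_v,\mathbb{R})$ is its stabilizer. A taming map is a smooth $\mathcal{J}\colon V\to\mathrm{Aut}(\mathbb{R}^{2n_v})$ whose values are complex structures $J$ with $\omega(J\cdot,J\cdot)=\omega$ and $\omega(\xi,J\xi)>0$ for $\xi\neq0$; every taming map is uniquely of the form $\begin{pmatrix}-\mathcal{I}^{-1}\mathcal{R} & \mathcal{I}^{-1}\\ -\mathcal{I}-\mathcal{R}\mathcal{I}^{-1}\mathcal{R} & \mathcal{R}\mathcal{I}^{-1}\end{pmatrix}$ with smooth $\mathcal{R},\mathcal{I}\colon V\to\mathrm{Sym}(n_v,\mathbb{R})$, $\mathcal{I}$ pointwise positive definite, and $\mu(\mathcal{J})=\mathcal{R}+i\mathcal{I}\colon V\to\mathbb{SH}(n_v)$ (the Siegel upper space of complex symmetric matrices with positive definite imaginary part). For $\mathfrak{A}=\begin{pmatrix}a&b\\ c&d\end{pmatrix}$ in $n_v\times n_v$ blocks, $\mathfrak{A}\cdot\tau=(c+d\tau)(a+b\tau)^{-1}$, applied pointwise to $\mathcal{N}$. *)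

(* Defs.v *)
From mathcomp Require Import all_boot all_algebra.
From mathcomp Require Import all_classical all_reals all_analysis.
From mathcomp Require Import complex.
Import numFieldNormedType.Exports.
Local Open Scope ring_scope.
Local Open Scope classical_set_scope.

Set Implicit Arguments.
Unset Strict Implicit.
Unset Printing Implicit Defensive.

(* Points of R^ns are row vectors 'rV[R]_ns.  Real matrices of size 2 n_v
   are represented as 'M[R]_(nv + nv), split into nv x nv blocks. *)

Fixpoint iterD (R : realType) (ns : nat) (vs : seq 'rV[R]_ns)
  (g : 'rV[R]_ns -> R) : 'rV[R]_ns -> R :=
  match vs with
  | [::] => g
  | v :: vs' => 'D_v (iterD vs' g)
  end.

Definition smooth_fun_on (R : realType) (ns : nat) (V : set 'rV[R]_ns)
  (g : 'rV[R]_ns -> R) : Prop :=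
  forall (vs : seq 'rV[R]_ns) (x : 'rV[R]_ns), V x ->
    {for x, continuous (iterD vs g)} /\
    forall v : 'rV[R]_ns, derivable (iterD vs g) x v.

Definition smooth_mx_on (R : realType) (ns p q : nat) (V : set 'rV[R]_ns)
  (F : 'rV[R]_ns -> 'M[R]_(p, q)) : Prop :=
  forall i j, smooth_fun_on V (fun x => F x i j).

Definition sym_mx (R : realType) (n : nat) (M : 'M[R]_n) : Prop := M^T = M.

Definition posdef_mx (R : realType) (n : nat) (M : 'M[R]_n) : Prop :=
  sym_mx M /\ forall v : 'rV[R]_n, v != 0 -> 0 < (v *m M *m v^T) 0 0.

Definition riemannian_metric (R : realType) (ns : nat) (V : set 'rV[R]_ns)
  (G : 'rV[R]_ns -> 'M[R]_ns) : Prop :=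
  smooth_mx_on V G /\ forall x, V x -> posdef_mx (G x).

Definition dmap (R : realType) (ns : nat) (f : 'rV[R]_ns -> 'rV[R]_ns)
  (x u : 'rV[R]_ns) : 'rV[R]_ns := 'D_u f x.

Definition isometry_of (R : realType) (ns : nat) (V : set 'rV[R]_ns)
  (G : 'rV[R]_ns -> 'M[R]_ns) (f : 'rV[R]_ns -> 'rV[R]_ns) : Prop :=
  (forall x, V x -> V (f x)) /\
  (exists g : 'rV[R]_ns -> 'rV[R]_ns,
     (forall x, V x -> V (g x)) /\
     (forall x, V x -> g (f x) = x) /\ (forall x, V x -> f (g x) = x) /\
     (forall k, smooth_fun_on V (fun x => f x 0 k)) /\
     (forall k, smooth_fun_on V (fun x => g x 0 k))) /\
  (forall x u w, V x ->
     (dmap f x u *m G (f x) *m (dmap f x w)^T) = u *m G x *m w^T).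

Definition omega_mx (R : realType) (nv : nat) : 'M[R]_(nv + nv) :=
  block_mx 0 (- 1%:M) 1%:M 0.

Definition symplectic (R : realType) (nv : nat) (A : 'M[R]_(nv + nv)) : Prop :=
  A^T *m omega_mx R nv *m A = omega_mx R nv.

Definition omega (R : realType) (nv : nat) (xi eta : 'cV[R]_(nv + nv)) : R :=
  (xi^T *m omega_mx R nv *m eta) 0 0.

Definition taming_map (R : realType) (ns nv : nat) (V : set 'rV[R]_ns)
  (J : 'rV[R]_ns -> 'M[R]_(nv + nv)) : Prop :=
  smooth_mx_on V J /\
  forall x, V x ->
    [/\ J x *m J x = - 1%:M,
        forall xi eta, omega (J x *m xi) (J x *m eta) = omega xi eta &
        forall xi : 'cV[R]_(nv + nv), xi != 0 -> 0 < omega xi (J x *m xi)].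

Definition taming_block (R : realType) (nv : nat) (Rm Im : 'M[R]_nv)
  : 'M[R]_(nv + nv) :=
  block_mx (- (invmx Im *m Rm)) (invmx Im)
           (- Im - Rm *m invmx Im *m Rm) (Rm *m invmx Im).

Definition cplx_mx (R : realType) (nv : nat) (Rm Im : 'M[R]_nv) : 'M[R[i]]_nv :=
  \matrix_(i, j) Complex (Rm i j) (Im i j).

Definition is_mu (R : realType) (ns nv : nat) (V : set 'rV[R]_ns)
  (J : 'rV[R]_ns -> 'M[R]_(nv + nv)) (N : 'rV[R]_ns -> 'M[R[i]]_nv) : Prop :=
  exists Rf If : 'rV[R]_ns -> 'M[R]_nv,
    [/\ smooth_mx_on V Rf, smooth_mx_on V If &
      forall x, V x ->
        [/\ sym_mx (Rf x), posdef_mx (If x),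
            J x = taming_block (Rf x) (If x) &
            N x = cplx_mx (Rf x) (If x)]].

Definition real_cmx (R : realType) (p q : nat) (M : 'M[R]_(p, q)) : 'M[R[i]]_(p, q) :=
  map_mx (fun r => Complex r 0) M.

Definition sp_act (R : realType) (nv : nat) (A : 'M[R]_(nv + nv))
  (tau : 'M[R[i]]_nv) : 'M[R[i]]_nv :=
  (real_cmx (dlsubmx A) + real_cmx (drsubmx A) *m tau) *m
  invmx (real_cmx (ulsubmx A) + real_cmx (ursubmx A) *m tau).

(* Main.v *)
Require Import Defs.
From mathcomp Require Import all_boot all_algebra.
From mathcomp Require Import all_classical all_reals all_analysis.
From mathcomp Require Import complex.
Import numFieldNormedType.Exports.
Import order.Order.TTheory GRing.Theory Num.Theory.
Local Open Scope ring_scope.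
Local Open Scope classical_set_scope.
Set Implicit Arguments.
Unset Strict Implicit.

Definition cm (R : realType) p q (P Q : 'M[R]_(p, q)) : 'M[R[i]]_(p, q) :=
  \matrix_(i, j) Complex (P i j) (Q i j).

Lemma sum_cplx (R : realType) n (f g : 'I_n -> R) :
  \sum_k (Complex (f k) (g k) : R[i]) = Complex (\sum_k f k) (\sum_k g k).
Proof.
apply: (big_rec3 (fun (y1 : R[i]) y2 y3 => y1 = Complex y2 y3)) => //.
by move=> i y1 y2 y3 _ ->.
Qed.

Lemma cm_mul (R : realType) p q r (P Q : 'M[R]_(p, q)) (P' Q' : 'M[R]_(q, r)) :
  cm P Q *m cm P' Q' = cm (P *m P' - Q *m Q') (P *m Q' + Q *m P').
Proof.
apply/matrixP=> i j; rewrite !mxE.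
rewrite (eq_bigr (fun k => Complex (P i k * P' k j - Q i k * Q' k j)
   (P i k * Q' k j + Q i k * P' k j))); last by move=> k _; rewrite !mxE.
rewrite sum_cplx sumrB big_split /=.
by [].
Qed.

Lemma cm_add (R : realType) p q (P Q P' Q' : 'M[R]_(p, q)) :
  cm P Q + cm P' Q' = cm (P + P') (Q + Q').
Proof. by apply/matrixP=> i j; rewrite !mxE. Qed.

Lemma cm_inj (R : realType) p q (P Q P' Q' : 'M[R]_(p, q)) :
  cm P Q = cm P' Q' -> P = P' /\ Q = Q'.
Proof.
move=> /matrixP H; split; apply/matrixP=> i j; have := H i j; rewrite !mxE; by case.
Qed.

Lemma cm0 (R : realType) p q : cm (0 : 'M[R]_(p, q)) 0 = 0.
Proof. by apply/matrixP=> i j; rewrite !mxE. Qed.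

Lemma cmE (R : realType) p q (Z : 'M[R[i]]_(p, q)) :
  Z = cm (map_mx (fun z : R[i] => complex.Re z) Z) (map_mx (fun z : R[i] => complex.Im z) Z).
Proof. by apply/matrixP=> i j; rewrite !mxE; case: (Z i j). Qed.

Lemma real_cmxE (R : realType) p q (X : 'M[R]_(p, q)) : real_cmx X = cm X 0.
Proof. by apply/matrixP=> i j; rewrite !mxE. Qed.

Lemma cplx_mxE (R : realType) n (P Q : 'M[R]_n) : cplx_mx P Q = cm P Q.
Proof. by []. Qed.

Lemma ker_unit (F : fieldType) n (M : 'M[F]_n) :
  (forall v : 'rV_n, v *m M = 0 -> v = 0) -> M \in unitmx.
Proof.
move=> H; rewrite -row_free_unit -kermx_eq0; apply/eqP/row_matrixP => i.
by rewrite row0; apply: H; rewrite -row_mul mulmx_ker row0.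
Qed.

Lemma tb_u1 (R : realType) n (R1 I1 : 'M[R]_n) :
  taming_block R1 I1 *m col_mx 1%:M R1 = - col_mx 0 I1.
Proof.
rewrite /taming_block mul_block_col !mulmx1 opp_col_mx oppr0 -!mulmxA.
by rewrite addNr addrNK.
Qed.

Lemma tb_u2 (R : realType) n (R1 I1 : 'M[R]_n) : I1 \in unitmx ->
  taming_block R1 I1 *m col_mx 0 I1 = col_mx 1%:M R1.
Proof.
move=> U; rewrite /taming_block mul_block_col !mulmx0 !add0r -mulmxA.
by rewrite mulVmx // mulmx1.
Qed.

Lemma tb_top (R : realType) n k (R1 I1 : 'M[R]_n) (m p : 'M[R]_(n, k)) :
  usubmx (taming_block R1 I1 *m col_mx m p) = invmx I1 *m (p - R1 *m m).
Proof.
rewrite /taming_block mul_block_col col_mxKu mulmxBr mulNmx mulmxA addrC.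
by [].
Qed.

Lemma core_real (R : realType) n (a b c d R1 I1 R2 I2 : 'M[R]_n) :
  I1 \in unitmx -> I2 \in unitmx ->
  (c + d *m R1 = R2 *m (a + b *m R1) - I2 *m (b *m I1) /\
   d *m I1 = R2 *m (b *m I1) + I2 *m (a + b *m R1))
  <-> (block_mx a b c d *m taming_block R1 I1 =
       taming_block R2 I2 *m block_mx a b c d).
Proof.
move=> U1 U2.
set A := block_mx a b c d.
set m1 := a + b *m R1; set m2 := b *m I1; set p1 := c + d *m R1; set p2 := d *m I1.
have Au1 : A *m col_mx 1%:M R1 = col_mx m1 p1 by rewrite mul_block_col !mulmx1.
have Au2 : A *m col_mx 0 I1 = col_mx m2 p2 by rewrite mul_block_col !mulmx0 !add0r.
clearbody m1 m2 p1 p2; split.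
- case=> e1 e2.
  have Au1' : A *m col_mx 1%:M R1 = col_mx 1%:M R2 *m m1 - col_mx 0 I2 *m m2.
    by rewrite Au1 !mul_col_mx opp_col_mx add_col_mx mul1mx mul0mx oppr0 addr0 e1.
  have Au2' : A *m col_mx 0 I1 = col_mx 1%:M R2 *m m2 + col_mx 0 I2 *m m1.
    by rewrite Au2 !mul_col_mx add_col_mx mul1mx mul0mx addr0 e2.
  have UU : row_mx (col_mx 1%:M R1) (col_mx 0 I1) \in unitmx.
    by rewrite -block_mxEh unitmxE det_lblock det1 mul1r -unitmxE.
  apply: (can_inj (mulmxK UU)); rewrite !mul_mx_row; congr row_mx.
  + rewrite -!mulmxA tb_u1 mulmxN Au2' Au1' mulmxBr !mulmxA tb_u1 tb_u2 //.
    by rewrite mulNmx opprD addrC.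
  + rewrite -!mulmxA tb_u2 // Au1' Au2' mulmxDr !mulmxA tb_u1 tb_u2 //.
    by rewrite mulNmx addrC.
- move=> H.
  have h1 : taming_block R2 I2 *m col_mx m1 p1 = - col_mx m2 p2.
    by rewrite -Au1 -Au2 mulmxA -H -mulmxA tb_u1 mulmxN.
  have h2 : taming_block R2 I2 *m col_mx m2 p2 = col_mx m1 p1.
    by rewrite -Au1 -Au2 mulmxA -H -mulmxA tb_u2.
  move: (congr1 usubmx h1) (congr1 usubmx h2).
  rewrite !tb_top opp_col_mx !col_mxKu => k1 k2.
  move: (congr1 (mulmx I2) k1) (congr1 (mulmx I2) k2).
  rewrite !mulmxA !mulmxV // !mul1mx mulmxN.
  move=> /eqP; rewrite subr_eq => /eqP -> /eqP; rewrite subr_eq => /eqP ->.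
  by split; rewrite addrC.
Qed.

Lemma omega_col0 (R : realType) n (s t : 'cV[R]_n) :
  (col_mx 0 s)^T *m omega_mx R n *m col_mx 0 t = 0.
Proof.
rewrite tr_col_mx trmx0 /omega_mx mul_row_block mul_row_col !mul0mx !mulmx0.
by rewrite !add0r mul0mx.
Qed.

Lemma quad_ge0 (R : realType) n (I1 : 'M[R]_n) (v : 'cV[R]_n) :
  posdef_mx I1 -> 0 <= (v^T *m I1 *m v) 0 0.
Proof.
case=> _ H; have [->|nz] := eqVneq v^T 0.
  by rewrite mul0mx mul0mx mxE.
by have := H _ nz; rewrite trmxK => /ltW.
Qed.

Lemma omega_xy (R : realType) n (R1 I1 : 'M[R]_n) (v1 v2 : 'cV[R]_n) :
  sym_mx R1 -> sym_mx I1 ->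
  (col_mx v1 (R1 *m v1 - I1 *m v2))^T *m omega_mx R n *m
     col_mx v2 (R1 *m v2 + I1 *m v1)
  = - (v1^T *m I1 *m v1 + v2^T *m I1 *m v2).
Proof.
move=> sR sI.
rewrite tr_col_mx /omega_mx mul_row_block mul_row_col !mulmx0 !mulmx1 !add0r addr0.
rewrite linearB /= !trmx_mul sR sI mulmxN mulmxDr mulmxBl !mulmxA.
by rewrite mulmx1 !mulNmx -addrA addrCA addNKr opprD addrC.
Qed.

Lemma M_unit (R : realType) n (a b c d R1 I1 : 'M[R]_n) :
  symplectic (block_mx a b c d) -> sym_mx R1 -> posdef_mx I1 ->
  cm (a + b *m R1) (b *m I1) \in unitmx.
Proof.
move=> sA sR pI.
rewrite -unitmx_tr; apply: ker_unit => w hw.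
have hv : cm (a + b *m R1) (b *m I1) *m w^T = 0.
  by rewrite -(trmxK (cm _ _)) -trmx_mul hw trmx0.
have [v1 [v2 ev]] : exists v1 v2, w^T = cm v1 v2 by exists (map_mx (fun z : R[i] => complex.Re z) w^T), (map_mx (fun z : R[i] => complex.Im z) w^T); exact: cmE.
move: hv; rewrite ev cm_mul -(@cm0 R n 1) => /cm_inj [h1 h2].
suff [z1 z2] : v1 = 0 /\ v2 = 0 by rewrite -(trmxK w) ev z1 z2 cm0 trmx0.
set A := block_mx a b c d.
set x := col_mx v1 (R1 *m v1 - I1 *m v2).
set y := col_mx v2 (R1 *m v2 + I1 *m v1).
have hx : usubmx (A *m x) = (a + b *m R1) *m v1 - b *m I1 *m v2.
  by rewrite mul_block_col col_mxKu mulmxDl mulmxBr !mulmxA addrA.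
have hy : usubmx (A *m y) = (a + b *m R1) *m v2 + b *m I1 *m v1.
  by rewrite mul_block_col col_mxKu mulmxDl mulmxDr !mulmxA addrA.
have key : x^T *m omega_mx R n *m y = 0.
  rewrite -sA.
  have -> : x^T *m (A^T *m omega_mx R n *m A) *m y =
            (A *m x)^T *m omega_mx R n *m (A *m y) by rewrite trmx_mul !mulmxA.
  rewrite -(vsubmxK (A *m x)) -(vsubmxK (A *m y)) hx hy h1 h2.
  exact: omega_col0.
have sI := pI.1; rewrite omega_xy // in key.
move: key => /eqP; rewrite oppr_eq0 => /eqP /(congr1 (fun M : 'M[R]_1 => M 0 0)).
rewrite mxE [X in _ = X]mxE => hq.
have g1 := quad_ge0 v1 pI; have g2 := quad_ge0 v2 pI.
have q1 : (v1^T *m I1 *m v1) 0 0 = 0.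
  by apply/eqP; rewrite eq_le g1 andbT -hq lerDl.
have q2 : (v2^T *m I1 *m v2) 0 0 = 0.
  by apply/eqP; rewrite eq_le g2 andbT -hq lerDr.
split.
  case: (eqVneq v1^T 0) => [e|nz]; first by rewrite -(trmxK v1) e trmx0.
  by have := pI.2 _ nz; rewrite trmxK q1 ltxx.
case: (eqVneq v2^T 0) => [e|nz]; first by rewrite -(trmxK v2) e trmx0.
by have := pI.2 _ nz; rewrite trmxK q2 ltxx.
Qed.

Lemma posdef_unit (R : realType) n (I1 : 'M[R]_n) : posdef_mx I1 -> I1 \in unitmx.
Proof.
move=> pI; apply: ker_unit => v hv; case: (eqVneq v 0) => // nz.
by have := pI.2 v nz; rewrite hv mul0mx mxE ltxx.
Qed.

Lemma sympl_unit (R : realType) n (A : 'M[R]_(n + n)) : symplectic A -> A \in unitmx.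
Proof.
move=> sA.
have OO : omega_mx R n *m omega_mx R n = - 1%:M.
  rewrite /omega_mx mulmx_block !mul0mx !mulmx0 !add0r !addr0 mulmx1 mul1mx.
  by rewrite -[0 : 'M[R]_n]oppr0 -opp_block_mx -scalar_mx_block.
have : (- (omega_mx R n *m A^T *m omega_mx R n)) *m A = 1%:M.
  by rewrite mulNmx -!mulmxA (mulmxA A^T) sA OO opprK.
by case/mulmx1_unit.
Qed.

Lemma core (R : realType) n (A : 'M[R]_(n + n)) (R1 I1 R2 I2 : 'M[R]_n) :
  symplectic A -> sym_mx R1 -> posdef_mx I1 -> posdef_mx I2 ->
  (sp_act A (cplx_mx R1 I1) = cplx_mx R2 I2) <->
  (A *m taming_block R1 I1 *m invmx A = taming_block R2 I2).
Proof.
move=> sA sR pI1 pI2.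
have U1 := posdef_unit pI1; have U2 := posdef_unit pI2.
have UA := sympl_unit sA.
have := @core_real R n (ulsubmx A) (ursubmx A) (dlsubmx A) (drsubmx A) R1 I1 R2 I2 U1 U2.
rewrite submxK => CR.
have MU := @M_unit R n (ulsubmx A) (ursubmx A) (dlsubmx A) (drsubmx A) R1 I1.
rewrite submxK in MU; have {}MU := MU sA sR pI1.
rewrite /sp_act !real_cmxE !cplx_mxE !cm_mul !cm_add !mul0mx !subr0 !addr0 !add0r.
transitivity (cm (dlsubmx A + drsubmx A *m R1) (drsubmx A *m I1) =
              cm R2 I2 *m cm (ulsubmx A + ursubmx A *m R1) (ursubmx A *m I1)).
  by split => [<-|->]; [rewrite mulmxKV | rewrite mulmxK].
rewrite cm_mul.
transitivity (dlsubmx A + drsubmx A *m R1 =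
     R2 *m (ulsubmx A + ursubmx A *m R1) - I2 *m (ursubmx A *m I1) /\
   drsubmx A *m I1 =
     R2 *m (ursubmx A *m I1) + I2 *m (ulsubmx A + ursubmx A *m R1)).
  by split => [/cm_inj|[-> ->]].
rewrite CR; split => [H|<-]; first by rewrite H mulmxK.
by rewrite mulmxKV.
Qed.

Unset Implicit Arguments.
Set Strict Implicit.

Theorem proposition2p29 (R : realType) (ns nv : nat) (V : set 'rV[R]_ns)
  (G : 'rV[R]_ns -> 'M[R]_ns) (J : 'rV[R]_ns -> 'M[R]_(nv + nv))
  (N : 'rV[R]_ns -> 'M[R[i]]_nv) :
  open V -> riemannian_metric V G -> taming_map V J -> is_mu V J N ->
  [set fA : ('rV[R]_ns -> 'rV[R]_ns) * 'M[R]_(nv + nv) |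
     [/\ isometry_of V G fA.1, symplectic fA.2 &
         forall x, V x -> sp_act fA.2 (N x) = N (fA.1 x)]]
  =
  [set fA : ('rV[R]_ns -> 'rV[R]_ns) * 'M[R]_(nv + nv) |
     [/\ isometry_of V G fA.1, symplectic fA.2 &
         forall x, V x -> fA.2 *m J x *m invmx fA.2 = J (fA.1 x)]].
Proof.
move=> _ _ _ [Rf [If [_ _ HN]]].
apply/seteqP; split=> -[f A] /= -[iso sA H]; split=> // x Vx; have Vfx := iso.1 x Vx;
  have := H x Vx;
  case: (HN x Vx) => sR1 pI1 -> ->; case: (HN (f x) Vfx) => _ pI2 -> ->;
  by case: (@core _ _ A (Rf x) (If x) (Rf (f x)) (If (f x)) sA sR1 pI1 pI2) => h1 h2 k; first [exact: h1 k | exact: h2 k].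
Qed.
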